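(* Let $m$ divide $n$ and let $f\colon\{0,\dots,n-1\}^d\to\{0,1\}$ be $k$-monotone. Then there is an $m$-block function $h\colon\{0,\dots,n-1\}^d\to\{0,1\}$ such that $\mathrm{dist}(f,h)<kd/m$.
   Context: $\{0,\dots,n-1\}^d$ is ordered coordinatewise; $f$ is $k$-monotone if there is no chain $x_1\preceq\cdots\preceq x_{k+1}$ with $f(x_1)=1$ and $f(x_i)\neq f(x_{i+1})$ for all $i\in[k]$. $\mathrm{dist}(f,h)$ is the fraction of points where $f,h$ differ. The domain is partitioned into $m^d$ blocks: for $x\in\{0,\dots,m-1\}^d$, the block of $x$ is $\{(n/m)x+z : z\in\{0,\dots,n/m-1\}^d\}$. A function is an $m$-block function if it is constant on each block. *)

(* Defs.v *)
From mathcomp Require Import all_boot all_order all_algebra.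
Set Implicit Arguments. Unset Strict Implicit. Unset Printing Implicit Defensive.
Import Order.TTheory GRing.Theory Num.Theory.

Definition point (n d : nat) := {ffun 'I_d -> 'I_n}.

Definition ple n d (x y : point n d) : bool := [forall i, x i <= y i]%N.

Definition violating_chain n d (f : point n d -> bool) (k : nat) (s : seq (point n d)) : Prop :=
  size s = k.+1 /\
  (forall x0 : point n d, f (head x0 s) = true) /\
  (forall i, (i < k)%N -> forall x0 : point n d,
       ple (nth x0 s i) (nth x0 s i.+1) /\ f (nth x0 s i) != f (nth x0 s i.+1)).

Definition k_monotone n d (f : point n d -> bool) (k : nat) : Prop :=
  ~ exists s, violating_chain f k s.

Definition dist n d (f h : point n d -> bool) : rat :=
  (#|[set x : point n d | f x != h x]|%:R / (n ^ d)%:R)%R.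

Definition same_block n d (m : nat) (x y : point n d) : bool :=
  [forall i, (x i %/ (n %/ m) == y i %/ (n %/ m))%N].

Definition block_function n d (m : nat) (h : point n d -> bool) : Prop :=
  forall x y : point n d, same_block m x y -> h x = h y.

(* Main.v *)
Require Import Defs.
From mathcomp Require Import all_boot all_order all_algebra.
From mathcomp Require Import zify.
Import Order.TTheory GRing.Theory Num.Theory.


Section Chain.
Variables (n d k : nat) (f : point n d -> bool).
Hypothesis kmon : k_monotone f k.

Lemma ple_trans : transitive (@ple n d).
Proof.
move=> y x z /forallP H1 /forallP H2; apply/forallP => i.
exact: leq_trans (H1 i) (H2 i).
Qed.

Definition Rv (a b : point n d) := ple a b && (f a != f b).

Fixpoint alt (s : seq (point n d)) : nat :=
  if s is x :: s' then (if s' is y :: _ then (f x != f y) + alt s' else 0) else 0.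

Lemma alt_cons x s : alt s <= alt (x :: s).
Proof. by case: s => [|y s] //=; exact: leq_addl. Qed.

Lemma altA x s : path (@ple n d) x s -> exists t, path Rv x t /\ size t = alt (x :: s).
Proof.
elim: s x => [|y s IH] x /=; first by move=> _; exists [::].
case/andP => pxy ps; case: (IH y ps) => t [pt st].
case E: (f x != f y).
  by exists (y :: t); rewrite /= /Rv pxy E pt st.
exists t; split; last by rewrite st.
move/negbFE/eqP: E => E.
case: t pt {st} => [|z t] //= /andP [/andP [pyz fyz] pt].
by rewrite pt andbT /Rv (@ple_trans _ _ _ pxy pyz) E.
Qed.

Lemma chainC x t : path Rv x t -> f x -> k <= size t -> False.
Proof.
move=> pt fx kt; apply: kmon; exists (x :: take k t); split.
  by rewrite /= size_takel.
split; first by [].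
move=> i ik x0.
have pt' : path Rv x (take k t).
  by move: pt; rewrite -{1}(cat_take_drop k t) cat_path => /andP [].
have := (pathP x0 pt' i); rewrite size_takel // => /(_ ik) /andP [h1 h2].
by split.
Qed.

Lemma alt_le x s : path (@ple n d) x s -> alt (x :: s) <= k.
Proof.
move=> ps; case: (@altA x s ps) => t [pt <-].
case fx: (f x).
  by rewrite leqNgt; apply/negP => /ltnW; apply: chainC pt fx.
case: t pt => [|y t] //= /andP [/andP [_ fy] pt].
rewrite fx eq_sym eqbF_neg negbK in fy.
by rewrite ltnNge; apply/negP; apply: chainC pt fy.
Qed.

End Chain.

Section Blocks.
Variables (n m d' k : nat).
Local Notation d := d'.+1.
Variable (f : point n d -> bool).
Hypothesis kmon : k_monotone f k.
Hypotheses (mpos : 0 < m) (npos : 0 < n) (mdiv : m %| n).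
Local Notation b := (n %/ m).
Local Notation B := {ffun 'I_d -> 'I_m}.

Lemma bpos : 0 < b.
Proof. by rewrite divn_gt0 // dvdn_leq. Qed.

Lemma nE : n = m * b.
Proof. by rewrite mulnC divnK. Qed.

Lemma blk_lt (x : point n d) i : x i %/ b < m.
Proof. by rewrite ltn_divLR ?bpos // -nE. Qed.

Lemma rep_lt (y : B) i : y i * b < n.
Proof. by rewrite [X in _ < X]nE ltn_pmul2r ?bpos. Qed.

Definition blk (x : point n d) : B := [ffun i => Ordinal (blk_lt x i)].
Definition rep (y : B) : point n d := [ffun i => Ordinal (rep_lt y i)].

Lemma blkE x i : (blk x i : nat) = x i %/ b.
Proof. by rewrite ffunE. Qed.
Lemma repE y i : (rep y i : nat) = y i * b.
Proof. by rewrite ffunE. Qed.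

Lemma blk_rep y : blk (rep y) = y.
Proof. by apply/ffunP => i; apply/val_inj; rewrite /= blkE repE mulnK ?bpos. Qed.

Lemma rep_le w : ple (rep (blk w)) w.
Proof. by apply/forallP => i; rewrite repE blkE leq_trunc_div. Qed.

Lemma w_le_rep w (y : B) : (forall i, blk w i < y i) -> ple w (rep y).
Proof.
move=> H; apply/forallP => i; rewrite repE.
apply: leq_trans (ltnW (ltn_ceil (w i) bpos)) _.
by rewrite leq_mul2r -blkE H orbT.
Qed.

Definition Qr (y y' : B) := [forall i, (y i < y' i)%N].

Lemma core (S : {set B}) (mn : B -> nat) :
  {in S &, injective mn} ->
  {in S &, forall y y', mn y < mn y' -> Qr y y'} ->
  (forall y, y \in S -> exists w, (blk w == y) && (f w != f (rep y))) ->
  #|S| <= k.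
Proof.
move=> Hinj Hord Hw.
pose wit y := if [pick w | (blk w == y) && (f w != f (rep y))] is Some w then w else rep y.
have Hwit y : y \in S -> blk (wit y) = y /\ f (wit y) != f (rep y).
  move=> yS; rewrite /wit; case: pickP => [w /andP [/eqP -> ->] //|H].
  by case: (Hw y yS) => w; rewrite H.
pose ys := sort (relpre mn leq) (enum S).
have ysS : all (mem S) ys.
  by apply/allP => y; rewrite mem_sort mem_enum.
have ysU : uniq ys by rewrite sort_uniq enum_uniq.
have ysz : size ys = #|S| by rewrite size_sort cardE.
have ysl : sorted ltn (map mn ys).
  rewrite ltn_sorted_uniq_leq map_inj_in_uniq ?ysU.
    rewrite sorted_map; apply: sort_sorted => a c; exact: leq_total.
  by move=> a c /(allP ysS) aS /(allP ysS) cS; apply: Hinj.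
have ysQ : sorted Qr ys.
  rewrite sorted_map in ysl; apply: (sub_in_sorted (P := mem S)) ysl => //.
pose L := flatten [seq [:: rep y; wit y] | y <- ys].
have HL : forall ys, all (mem S) ys -> sorted Qr ys ->
   sorted (@ple n d) (flatten [seq [:: rep y; wit y] | y <- ys]) /\
   size ys <= @alt _ _ f (flatten [seq [:: rep y; wit y] | y <- ys]).
  elim=> [|y ys' IH] /=; first by [].
  move=> /andP [yS aS] sQ.
  have sQ' : sorted Qr ys' by case: ys' sQ {IH aS} => //= y' ys' /andP [].
  case: (IH aS sQ') => IH1 IH2.
  case: (Hwit y yS) => bw fw.
  split.
    rewrite -{1}bw rep_le /=.
    case: ys' sQ IH1 {IH2 IH aS sQ'} => [|y' ys''] //= /andP [/forallP Qy _] ->.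
    by rewrite andbT; apply: w_le_rep => i; rewrite bw.
  rewrite eq_sym in fw; rewrite fw add1n ltnS.
  have := @alt_cons _ _ f (wit y) (flatten [seq [:: rep y0; wit y0] | y0 <- ys']).
  by move=> /= H; exact: leq_trans IH2 H.
case: (HL ys ysS ysQ); rewrite -ysz.
case: ys {ysS ysU ysz ysl ysQ L} => [|y ys'] //= H1 H2.
apply: leq_trans H2 _. exact: (@alt_le _ _ _ _ kmon (rep y) (wit y :: flatten [seq [:: rep y0; wit y0] | y0 <- ys']) H1).
Qed.

Definition amin (y : B) : 'I_d := [arg min_(i < ord0) (y i : nat)].

Lemma amin_le (y : B) (j : 'I_d) : y (amin y) <= y j.
Proof. by rewrite /amin; case: arg_minnP => // i _ H; exact: H. Qed.

Lemma diff_lt (y : B) (j : 'I_d') : y (lift (amin y) j) - y (amin y) < m.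
Proof. exact: leq_ltn_trans (leq_subr _ _) (ltn_ord _). Qed.

Definition key (y : B) : 'I_d * {ffun 'I_d' -> 'I_m} :=
  (amin y, [ffun j => Ordinal (diff_lt y j)]).

Lemma key_diff (y y' : B) : key y = key y' -> forall i, y i - y (amin y) = y' i - y' (amin y').
Proof.
case=> Ha /ffunP Hf i.
case: (unliftP (amin y) i) => [j ->| ->]; last by rewrite Ha !subnn.
have := congr1 val (Hf j); rewrite !ffunE /= => ->.
by rewrite Ha.
Qed.

Lemma key_val (y : B) (i : 'I_d) : (y i : nat) = y i - y (amin y) + y (amin y).
Proof. by rewrite subnK // amin_le. Qed.

Definition NC : {set B} := [set y | [exists w, (blk w == y) && (f w != f (rep y))]].

Lemma fiber_le K : #|[set y in NC | key y == K]| <= k.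
Proof.
apply: (@core _ (fun y => y K.1 : nat)).
- move=> y y'; rewrite !inE => /andP [_ /eqP Hy] /andP [_ /eqP Hy'] Heq.
  have Hd := key_diff _ _ (etrans Hy (esym Hy')).
  have Ha : amin y = K.1 by rewrite -Hy.
  have Ha' : amin y' = K.1 by rewrite -Hy'.
  apply/ffunP => i; apply/val_inj => /=.
  by rewrite (key_val y i) (key_val y' i) Hd Ha Ha' Heq.
- move=> y y'; rewrite !inE => /andP [_ /eqP Hy] /andP [_ /eqP Hy'] Hlt.
  have Hd := key_diff _ _ (etrans Hy (esym Hy')).
  have Ha : amin y = K.1 by rewrite -Hy.
  have Ha' : amin y' = K.1 by rewrite -Hy'.
  apply/forallP => i.
  by rewrite (key_val y i) (key_val y' i) Hd Ha Ha' ltn_add2l.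
- by move=> y; rewrite !inE => /andP [/existsP [w Hw] _]; exists w.
Qed.

Lemma NC_le : #|NC| <= k * (d * m ^ d').
Proof.
rewrite -sum1_card (partition_big key predT) //=.
apply: (@leq_trans (\sum_(K : 'I_d * {ffun 'I_d' -> 'I_m}) k)).
  apply: leq_sum => K _; rewrite sum1_card; apply: leq_trans (fiber_le K); apply: subset_leq_card; by apply/subsetP => y; rewrite unfold_in /= !inE.
have -> : \sum_(K : 'I_d * {ffun 'I_d' -> 'I_m}) k = #|{: 'I_d * {ffun 'I_d' -> 'I_m}}| * k.
  by rewrite -sum_nat_const; apply: eq_bigl => K; rewrite inE.
by rewrite card_prod card_ffun !card_ord mulnC.
Qed.


Definition E : {set point n d} := [set x | f x != f (rep (blk x))].
Definition off (x : point n d) : {ffun 'I_d -> 'I_b} := [ffun i => Ordinal (ltn_pmod (x i) bpos)].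
Definition off0 : {ffun 'I_d -> 'I_b} := [ffun i => Ordinal (ltn_pmod 0 bpos)].

Lemma E_le : #|E| <= #|NC| * (b ^ d - 1).
Proof.
have Hinj : injective (fun x => (blk x, off x)).
  move=> x x' [] /ffunP Hb /ffunP Ho; apply/ffunP => i; apply/val_inj => /=.
  have := congr1 val (Hb i); have := congr1 val (Ho i); rewrite !ffunE /= => h1 h2.
  by rewrite (divn_eq (x i) b) (divn_eq (x' i) b) h1 h2.
rewrite -(card_imset _ Hinj).
apply: leq_trans (subset_leq_card (_ : _ \subset setX NC [set~ off0])) _.
  apply/subsetP => p /imsetP [x xE ->]; rewrite !inE /=.
  move: xE; rewrite inE => fx; apply/andP; split.
    by apply/existsP; exists x; rewrite eqxx fx.
  apply/negP => /eqP Ho; move: fx; suff -> : rep (blk x) = x by rewrite eqxx.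
  apply/ffunP => i; apply/val_inj => /=.
  have := congr1 val (congr1 (fun g : {ffun 'I_d -> 'I_b} => g i) Ho); rewrite !ffunE /= mod0n => h.
  by rewrite blkE [in RHS](divn_eq (x i) b) h addn0.
by rewrite cardsX cardsC1 card_ffun !card_ord subn1.
Qed.

End Blocks.

Local Open Scope ring_scope.

Theorem lemma6p1 (n d m k : nat) (f : point n d -> bool) :
  (0 < m)%N -> (0 < d)%N -> (0 < k)%N -> (m %| n)%N ->
  k_monotone f k ->
  exists h : point n d -> bool,
    block_function m h /\ dist f h < ((k * d)%:R / m%:R : rat).
Proof.
move=> mpos; case: d f => [|d'] f // _ kpos mdiv kmon.
have Hrhs : 0 < ((k * d'.+1)%:R / m%:R : rat).
  by rewrite divr_gt0 // ltr0n // muln_gt0 kpos.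
case: (posnP n) => [n0|npos].
  subst n; exists (fun _ => false); split; first by [].
  rewrite /dist; have -> : #|[set x : point 0 d'.+1 | f x != false]| = 0%N.
    apply/eqP; rewrite cards_eq0; apply/eqP/setP => x.
    by have := ltn_ord (x ord0).
  by rewrite mul0r.
exists (fun x => f (rep n m d' mpos npos mdiv (blk n m d' mpos npos mdiv x))); split.
  move=> x y /forallP H.
  suff -> : blk n m d' mpos npos mdiv x = blk n m d' mpos npos mdiv y by [].
  apply/ffunP => i; apply/val_inj => /=; rewrite !blkE; exact: (eqP (H i)).
rewrite /dist.
change #|E n m d' f mpos npos mdiv| with #|E n m d' f mpos npos mdiv|.
have H1 := E_le _ _ _ f mpos npos mdiv.
have H2 := NC_le _ _ _ _ _ kmon mpos npos mdiv.
have Hb := bpos _ _ mpos npos mdiv.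
have HnE := nE _ _ mdiv.
rewrite ltr_pdivlMr ?ltr0n // mulrAC ltr_pdivrMr ?ltr0n ?expn_gt0 ?npos //.
rewrite -!natrM ltr_nat.
set a := #|_| in H1 *.
set nc := #|NC _ _ _ _ _ _ _| in H1 H2.
set bb := (n %/ m)%N in Hb HnE H1.
rewrite HnE expnMn expnS.
have HX : (0 < bb ^ d'.+1)%N by rewrite expn_gt0 Hb.
move: H1; rewrite -(prednK HX) subn1 /=.
move: (bb ^ d'.+1).-1 => X H1.
have HY : (0 < m ^ d')%N by rewrite expn_gt0 mpos.
move: (m ^ d')%N HY H2 => Y HY H2.
have H3 : (a * m <= k * (d'.+1 * Y) * X * m)%N.
  by rewrite leq_mul2r; apply/orP; right; apply: leq_trans H1 _; rewrite leq_mul2r H2 orbT.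
apply: leq_ltn_trans H3 _.
nia.
Qed.
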